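(* For every pair of integers $n\ge 2$ and $1\le r\le n-1$, let $s:=\min\{r,n-r\}$. Then \[ \mathcal{K}^{\mathsf{TJ}}(J(n,r))= \begin{cases} \{k:k\ge 1\}, & s=1,\\ \{s\}, & s\ge 2\text{ and }n=2s,\\ \{s,n-s\}, & s\ge 2\text{ and }n>2s. \end{cases} \]
   Context: All graphs are finite, simple, undirected. A $k$-clique of a graph $H$ is a set of $k$ pairwise adjacent vertices. For a graph $H$ and integer $k\ge1$, the Token Jumping graph $\mathsf{TJ}_k(H)$ has as vertices the $k$-cliques of $H$, and two $k$-cliques $A,B$ are adjacent iff $|A\cap B|=k-1$. For a graph $G$, $\mathcal{K}^{\mathsf{TJ}}(G)=\{k\ge1:\ \exists\text{ a graph }H\text{ with }\mathsf{TJ}_k(H)\cong G\}$. The Johnson graph $J(n,r)$ has as vertices the $r$-subsets of $\{1,\dots,n\}$, two being adjacent iff their intersection has size $r-1$. *)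

(* Defs.v *)
From mathcomp Require Import all_boot.
Set Implicit Arguments. Unset Strict Implicit. Unset Printing Implicit Defensive.

Definition simple_graph (V : finType) (e : rel V) : Prop :=
  symmetric e /\ irreflexive e.

Definition graph_iso (T1 T2 : finType) (e1 : rel T1) (e2 : rel T2) : Prop :=
  exists f : T1 -> T2, bijective f /\ forall x y, e2 (f x) (f y) = e1 x y.

Definition is_kclique (V : finType) (e : rel V) (k : nat) (A : {set V}) : bool :=
  (#|A| == k) && [forall x in A, forall y in A, (x != y) ==> e x y].

Definition TJ_vertex (V : finType) (e : rel V) (k : nat) : finType :=
  {A : {set V} | is_kclique e k A}.

Definition TJ_rel (V : finType) (e : rel V) (k : nat) : rel (@TJ_vertex V e k) :=
  fun A B => #|val A :&: val B| == k.-1.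

Definition J_vertex (n r : nat) : finType := {A : {set 'I_n} | #|A| == r}.
Definition J_rel (n r : nat) : rel (J_vertex n r) :=
  fun A B => #|val A :&: val B| == r.-1.

Definition in_KTJ (T : finType) (g : rel T) (k : nat) : Prop :=
  1 <= k /\
  exists (V : finType) (e : rel V), simple_graph e /\ graph_iso (@TJ_rel V e k) g.

(* Main.v *)
Require Import Defs.
From mathcomp Require Import all_boot zify.
Set Implicit Arguments. Unset Strict Implicit. Unset Printing Implicit Defensive.

Ltac simp_hyps := repeat match goal with
 | H : is_true (?u \notin ?S) |- context [?u \in ?S] => rewrite (negbTE H)
 | H : is_true (?u != ?v) |- context [?u == ?v] => rewrite (negbTE H)
 | H : is_true (?u != ?v) |- context [?v == ?u] => rewrite eq_sym (negbTE H)
 | H : is_true (?u \in ?S) |- context [?u \in ?S] => rewrite H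
 end.

Ltac memsolve :=
  let z := fresh "z" in apply/setP => z; rewrite !inE;
  repeat match goal with
  | |- context [z == ?u] => case: (eqVneq z u) => [->|?]
  end; rewrite ?eqxx /=; simp_hyps; rewrite ?eqxx ?andbT ?orbT ?andbF ?orbF ?andbb ?orbb //=;
  repeat match goal with |- context [z \in ?S] => case: (z \in S) end; done.

Lemma cU1 (V : finType) (x : V) (I : {set V}) : x \notin I -> #|x |: I| = #|I|.+1.
Proof. by move=> h; rewrite cardsU1 h. Qed.

Lemma iU1 (V : finType) (I : {set V}) (x y : V) :
  x \notin I -> y \notin I -> x != y -> (x |: I) :&: (y |: I) = I.
Proof. move=> hx hy xy. memsolve. Qed.

Lemma cT2 (V : finType) (I : {set V}) (a b y : V) :
  a \notin I -> b \notin I -> a != b -> y \in I ->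
  #|a |: (b |: (I :\ y))| = #|I|.+1.
Proof.
move=> ha hb ab hy.
rewrite cardsU1 cardsU1 !inE (negbTE ab) eq_sym.
have -> : (a \in I) = false by apply: negbTE.
have -> : (b \in I) = false by apply: negbTE.
rewrite !andbF /= (cardsD1 y I) hy.
case: (y == a) => //=; rewrite ?add1n //.
Qed.

Lemma iAT2 (V : finType) (I : {set V}) (a b y : V) :
  a \notin I -> b \notin I -> a != b -> y \in I ->
  (a |: I) :&: (a |: (b |: (I :\ y))) = a |: (I :\ y).
Proof. move=> ha hb ab hy; memsolve. Qed.

Lemma iBT2 (V : finType) (I : {set V}) (a b y : V) :
  a \notin I -> b \notin I -> a != b -> y \in I ->
  (b |: I) :&: (a |: (b |: (I :\ y))) = b |: (I :\ y).
Proof. move=> ha hb ab hy; memsolve. Qed.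

Lemma iT1T2 (V : finType) (I : {set V}) (a b x y : V) :
  a \notin I -> b \notin I -> a != b -> y \in I -> x \notin I -> x != a -> x != b ->
  (x |: I) :&: (a |: (b |: (I :\ y))) = I :\ y.
Proof. move=> ha hb ab hy hx xa xb; memsolve. Qed.

Lemma iT2T2 (V : finType) (I : {set V}) (a b y y' : V) :
  a \notin I -> b \notin I -> a != b -> y \in I -> y' \in I -> y != y' ->
  (a |: (b |: (I :\ y))) :&: (a |: (b |: (I :\ y'))) = a |: (b |: ((I :\ y) :\ y')).
Proof. move=> ha hb ab hy hy' yy; memsolve. Qed.

Lemma cD1 (V : finType) (I : {set V}) (y : V) : y \in I -> #|I :\ y| = #|I|.-1.
Proof. by move=> hy; rewrite (cardsD1 y I) hy. Qed.

Lemma cU1D1 (V : finType) (I : {set V}) (a y : V) :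
  a \notin I -> y \in I -> #|a |: (I :\ y)| = #|I|.
Proof.
move=> ha hy; rewrite cardsU1 cD1 // !inE.
have -> : (a \in I) = false by apply: negbTE.
rewrite andbF /=; have := hy; rewrite (cardsD1 y I) hy => _; lia.
Qed.

Lemma cT2T2 (V : finType) (I : {set V}) (a b y y' : V) :
  a \notin I -> b \notin I -> a != b -> y \in I -> y' \in I -> y != y' ->
  #|a |: (b |: ((I :\ y) :\ y'))| = #|I|.
Proof.
move=> ha hb ab hy hy' yy.
rewrite cardsU1 cardsU1 !inE (negbTE ab) eq_sym.
have -> : (a \in I) = false by apply: negbTE.
have -> : (b \in I) = false by apply: negbTE.
rewrite !andbF /=.
have h1 : y' \in I :\ y by rewrite !inE eq_sym yy.
rewrite cD1 // cD1 //.
have : 0 < #|I :\ y| by apply/card_gt0P; exists y'.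
rewrite cD1 //; lia.
Qed.

Lemma classify (V : finType) (I : {set V}) (a b : V) (C : {set V}) :
  a \notin I -> b \notin I -> a != b ->
  #|C| = #|I|.+1 -> #|(a |: I) :&: C| = #|I| -> #|(b |: I) :&: C| = #|I| ->
  (exists x, [/\ x \notin I, x != a, x != b & C = x |: I]) \/
  (exists y, y \in I /\ C = a |: (b |: (I :\ y))).
Proof.
move=> ha hb ab hC hA hB.
case: (boolP (I \subset C)) => sIC.
  left.
  have h1 : #|C :\: I| == 1.
    by have := cardsID I C; rewrite (setIidPr sIC) hC; lia.
  case/cards1P: h1 => x hx.
  have xC : x \in C :\: I by rewrite hx set11.
  have xI : x \notin I by move: xC; rewrite inE => /andP[].
  have defC : C = x |: I.
    apply/setP => z; rewrite !inE; apply/idP/idP.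
      move=> zC; case: (boolP (z \in I)) => zI; rewrite ?orbT //.
      have : z \in C :\: I by rewrite inE zI.
      by rewrite hx inE => ->.
    case/orP => [/eqP -> | zI]; first by move: xC; rewrite inE => /andP[].
    exact: (subsetP sIC).
  exists x; split => //.
    apply/negP => /eqP xa; move: hA; rewrite defC xa setIid cU1 //; lia.
  apply/negP => /eqP xb; move: hB; rewrite defC xb setIid cU1 //; lia.
right.
case/subsetPn: sIC => y yI yC.
exists y; split => //.
have key : forall u, u \notin I -> #|(u |: I) :&: C| = #|I| -> (u |: I) :&: C = (u |: I) :\ y.
  move=> u hu hu2; apply/eqP.
  have sub : (u |: I) :&: C \subset (u |: I) :\ y.
    apply/subsetP => z; rewrite !inE => /andP[zI zC].
    rewrite zI andbT; apply/negP => /eqP zy; move: yC; rewrite -zy zC //.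
  have := subset_leqif_cards sub.
  have -> : #|(u |: I) :\ y| = #|I|.
    have := cardsD1 y (u |: I); rewrite !inE yI orbT cU1 //; lia.
  by rewrite hu2; case => _ <-.
have ha2 := key a ha hA; have hb2 := key b hb hB.
have memA : forall z, z \in (a |: I) :\ y -> z \in C.
  by move=> z; rewrite -ha2 inE => /andP[].
have memB : forall z, z \in (b |: I) :\ y -> z \in C.
  by move=> z; rewrite -hb2 inE => /andP[].
apply/eqP; rewrite eq_sym eqEcard hC cT2 // leqnn andbT.
apply/subsetP => z; rewrite !inE => /orP[/eqP -> | /orP[/eqP -> | /andP[zy zI]]].
- apply: memA; rewrite !inE eqxx andbT; apply/negP => /eqP ay; move: ha; rewrite ay yI //.
- apply: memB; rewrite !inE eqxx andbT; apply/negP => /eqP by'; move: hb; rewrite by' yI //.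
- by apply: memA; rewrite !inE zy zI orbT.
Qed.

Definition adjs (V : finType) (k : nat) (X Y : {set V}) := #|X :&: Y| == k.-1.

Definition cnt (T : finType) (g : rel T) (u v w : T) :=
  #|[set x | g u x && g v x && ((x == w) || g w x)]|.

Lemma cnt_iso (T1 T2 : finType) (g1 : rel T1) (g2 : rel T2) (f : T1 -> T2) :
  bijective f -> (forall x y, g2 (f x) (f y) = g1 x y) ->
  forall u v w, cnt g2 (f u) (f v) (f w) = cnt g1 u v w.
Proof.
move=> fb hf u v w; rewrite /cnt.
have finj : injective f := bij_inj fb.
rewrite -(card_imset _ finj).
case: fb => h fh hf'.
apply: eq_card => z; have [z' ->] : exists z', z = f z' by exists (h z).
rewrite inE (mem_imset _ _ finj) inE.
by rewrite !hf (inj_eq finj).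
Qed.

Lemma card_sig (V : finType) (P : pred {set V}) (Q : pred {set V}) :
  #|[set x : {X : {set V} | P X} | Q (val x)]| = #|[set X | P X && Q X]|.
Proof.
rewrite -(card_imset _ val_inj).
apply: eq_card => X; rewrite inE; apply/imsetP/idP.
  by case=> x; rewrite inE => hq ->; rewrite (valP x) hq.
by case/andP => hP hQ; exists (exist _ X hP); rewrite ?inE.
Qed.

Lemma cnt_sig (V : finType) (P : pred {set V}) (k : nat) (u v w : {X : {set V} | P X}) :
  cnt (fun A B : {X : {set V} | P X} => #|val A :&: val B| == k.-1) u v w =
  #|[set X | P X && (adjs k (val u) X && adjs k (val v) X && ((X == val w) || adjs k (val w) X))]|.
Proof.
rewrite /cnt -(card_sig P (fun X => adjs k (val u) X && adjs k (val v) X && ((X == val w) || adjs k (val w) X))).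
by apply: eq_card => x; rewrite !inE.
Qed.

Definition SS (V : finType) (P : pred {set V}) (k : nat) (A B W : {set V}) :=
  [set X | P X && (adjs k A X && adjs k B X && ((X == W) || adjs k W X))].

Lemma T2_inj (V : finType) (I : {set V}) (a b : V) :
  a \notin I -> b \notin I ->
  {in I &, injective (fun y => a |: (b |: (I :\ y)))}.
Proof.
move=> ha hb y y' hy hy' /setP /(_ y); rewrite !inE eqxx /= hy andbT.
case: (eqVneq y a) => [ya|_]; first by move: ha; rewrite -ya hy.
case: (eqVneq y b) => [yb|_]; first by move: hb; rewrite -yb hy.
by case: (eqVneq y y').
Qed.

Lemma T1_inj (V : finType) (I : {set V}) (D : {pred V}) :
  (forall x, x \in D -> x \notin I) -> {in D &, injective (fun x => x |: I)}.
Proof.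
move=> hD x x' hx hx' /setP /(_ x); rewrite !inE eqxx /=.
have := hD x hx; case: (x \in I) => //= _.
by rewrite orbF => /esym/eqP.
Qed.

Lemma S_T2 (V : finType) (P : pred {set V}) (I : {set V}) (a b y0 : V) :
  a \notin I -> b \notin I -> a != b -> y0 \in I ->
  (forall X, P X -> #|X| = #|I|.+1) ->
  (forall y, y \in I -> P (a |: (b |: (I :\ y)))) ->
  #|SS P #|I|.+1 (a |: I) (b |: I) (a |: (b |: (I :\ y0)))| = #|I|.
Proof.
move=> ha hb ab hy0 hP hT2.
have -> : SS P #|I|.+1 (a |: I) (b |: I) (a |: (b |: (I :\ y0))) =
          [set a |: (b |: (I :\ y)) | y in I].
  apply/setP => X; rewrite !inE /adjs /=; apply/idP/idP.
    case/andP => hX /andP[/andP[/eqP hA /eqP hB]].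
    case: (classify ha hb ab (hP X hX) hA hB) => [[x [hx xa xb ->]] | [y [hy ->]]].
      case/orP => [/eqP hW | ].
        have : a \in x |: I by rewrite hW !inE eqxx.
        by rewrite !inE (negbTE ha) eq_sym (negbTE xa).
      rewrite setIC iT1T2 // cD1 //.
      have : 0 < #|I| by apply/card_gt0P; exists y0.
      lia.
    by move=> _; apply/imsetP; exists y.
  case/imsetP => y hy ->.
  rewrite hT2 //= iAT2 // iBT2 // !cU1D1 // !eqxx /=.
  have [ey|ny] := eqVneq y y0; first by rewrite ey eqxx.
  have ny' : y0 != y by rewrite eq_sym.
  by rewrite (iT2T2 ha hb ab hy0 hy ny') (cT2T2 ha hb ab hy0 hy ny') eqxx orbT.
by rewrite card_in_imset //; apply: T2_inj.
Qed.

Lemma S_T1 (V : finType) (P : pred {set V}) (I : {set V}) (a b x0 : V) :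
  a \notin I -> b \notin I -> a != b -> x0 \notin I -> x0 != a -> x0 != b ->
  (forall X, P X -> #|X| = #|I|.+1) ->
  (forall x, x \notin I -> x != a -> x != b -> P (x |: I)) ->
  #|SS P #|I|.+1 (a |: I) (b |: I) (x0 |: I)| = #|V| - #|I|.+2.
Proof.
move=> ha hb ab hx0 xa0 xb0 hP hT1.
have -> : SS P #|I|.+1 (a |: I) (b |: I) (x0 |: I) =
          [set x |: I | x in ~: (a |: (b |: I))].
  apply/setP => X; rewrite !inE /adjs /=; apply/idP/idP.
    case/andP => hX /andP[/andP[/eqP hA /eqP hB]].
    case: (classify ha hb ab (hP X hX) hA hB) => [[x [hx xa xb ->]] | [y [hy ->]]].
      by move=> _; apply/imsetP; exists x => //; rewrite !inE (negbTE xa) (negbTE xb) (negbTE hx).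
    case/orP => [/eqP hW | ].
      have : a \in x0 |: I by rewrite -hW !inE eqxx.
      by rewrite !inE (negbTE ha) eq_sym (negbTE xa0).
    rewrite iT1T2 // cD1 //.
    have : 0 < #|I| by apply/card_gt0P; exists y.
    lia.
  case/imsetP => x; rewrite !inE negb_or negb_or => /andP[xa /andP[xb hx]] ->.
  rewrite hT1 //= iU1 // 1?eq_sym // iU1 // 1?eq_sym // eqxx /=.
  have [ex|nx] := eqVneq x x0; first by rewrite ex eqxx.
  by rewrite iU1 1?eq_sym // eqxx orbT.
rewrite card_in_imset; last first.
  by apply: T1_inj => x; rewrite !inE negb_or negb_or => /andP[_ /andP[_ ->]].
have := cardsC (a |: (b |: I)).
rewrite cardsU1 cardsU1 !inE (negbTE ab) (negbTE ha) (negbTE hb) /=.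
lia.
Qed.

Lemma decomp (V : finType) (k : nat) (A B : {set V}) :
  1 <= k -> #|A| = k -> #|B| = k -> #|A :&: B| = k.-1 ->
  exists a b, [/\ a \notin A :&: B, b \notin A :&: B, a != b,
                  A = a |: (A :&: B) & B = b |: (A :&: B)].
Proof.
move=> k1 hA hB hAB.
have h1 : #|A :\: B| == 1 by have := cardsID B A; lia.
have h2 : #|B :\: A| == 1 by have := cardsID A B; rewrite setIC; lia.
case/cards1P: h1 => a ha; case/cards1P: h2 => b hb.
have aA : a \in A :\: B by rewrite ha set11.
have bB : b \in B :\: A by rewrite hb set11.
move: (aA) (bB); rewrite !inE => /andP[naB aA'] /andP[nbA bB'].
exists a, b; split.
- by rewrite inE negb_and naB orbT.
- by rewrite inE negb_and nbA.
- by apply/eqP => eab; move: naB; rewrite eab bB'.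
- apply/setP => z; rewrite !inE; case: (boolP (z \in B)) => zB; rewrite ?andbT ?andbF ?orbF.
    case: (eqVneq z a) => [-> //| _ /=]; by [].
  have : (z \in A :\: B) = (z == a) by rewrite ha inE.
  by rewrite inE zB.
- apply/setP => z; rewrite !inE; case: (boolP (z \in A)) => zA; rewrite ?andbT ?andbF ?orbF /=.
    case: (eqVneq z b) => [-> //| _ /=]; by [].
  have : (z \in B :\: A) = (z == b) by rewrite hb inE.
  by rewrite inE zA.
Qed.

Lemma kc_e (V : finType) (e : rel V) (k : nat) (A : {set V}) x y :
  is_kclique e k A -> x \in A -> y \in A -> x != y -> e x y.
Proof.
case/andP => _ /forall_inP h xA yA xy.
by have /forall_inP/(_ y yA) := h x xA; rewrite xy.
Qed.

Lemma kc_card (V : finType) (e : rel V) (k : nat) (A : {set V}) :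
  is_kclique e k A -> #|A| = k.
Proof. by case/andP => /eqP. Qed.

Lemma kc_intro (V : finType) (e : rel V) (k : nat) (A : {set V}) :
  #|A| = k -> (forall x y, x \in A -> y \in A -> x != y -> e x y) -> is_kclique e k A.
Proof.
move=> hA h; apply/andP; split; first by apply/eqP.
apply/forall_inP => x xA; apply/forall_inP => y yA; apply/implyP; exact: h.
Qed.

Lemma clique_T2 (V : finType) (e : rel V) (I : {set V}) (a b y0 y : V) :
  a \notin I -> b \notin I -> a != b -> y0 \in I -> y \in I ->
  is_kclique e #|I|.+1 (a |: I) -> is_kclique e #|I|.+1 (b |: I) ->
  is_kclique e #|I|.+1 (a |: (b |: (I :\ y0))) ->
  is_kclique e #|I|.+1 (a |: (b |: (I :\ y))).
Proof.
move=> ha hb ab hy0 hy cA cB cW.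
apply: kc_intro; first by rewrite cT2.
have aW : a \in a |: (b |: (I :\ y0)) by rewrite !inE eqxx.
have bW : b \in a |: (b |: (I :\ y0)) by rewrite !inE eqxx orbT.
have aA : a \in a |: I by rewrite !inE eqxx.
have bB : b \in b |: I by rewrite !inE eqxx.
have IA : forall z, z \in I -> z \in a |: I by move=> z zI; rewrite !inE zI orbT.
have IB : forall z, z \in I -> z \in b |: I by move=> z zI; rewrite !inE zI orbT.
move=> z1 z2; rewrite !inE => /orP[/eqP -> | /orP[/eqP -> | /andP[_ z1I]]]
  /orP[/eqP -> | /orP[/eqP -> | /andP[_ z2I]]] zz.
all: try by rewrite eqxx in zz.
all: first [ solve [apply: (kc_e cW) => //; rewrite !inE ?eqxx ?z1I ?z2I ?orbT //]
           | solve [apply: (kc_e cA) => //; rewrite !inE ?eqxx ?z1I ?z2I ?orbT //]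
           | solve [apply: (kc_e cB) => //; rewrite !inE ?eqxx ?z1I ?z2I ?orbT //] ].
Qed.

Lemma TJ_set (V : finType) (e : rel V) (I : {set V}) (a b : V) (W1 W2 : {set V}) :
  a \notin I -> b \notin I -> a != b ->
  #|W1| = #|I|.+1 -> #|W2| = #|I|.+1 ->
  #|(a |: I) :&: W1| = #|I| -> #|(b |: I) :&: W1| = #|I| ->
  #|(a |: I) :&: W2| = #|I| -> #|(b |: I) :&: W2| = #|I| ->
  W1 != W2 -> #|W1 :&: W2| != #|I| ->
  (exists y, y \in I /\ W1 = a |: (b |: (I :\ y))) \/
  (exists y, y \in I /\ W2 = a |: (b |: (I :\ y))).
Proof.
move=> ha hb ab c1 c2 a1 b1 a2 b2 ne nadj.
case: (classify ha hb ab c1 a1 b1) => [[x1 [hx1 xa1 xb1 e1]] | ]; last by left.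
case: (classify ha hb ab c2 a2 b2) => [[x2 [hx2 xa2 xb2 e2]] | ]; last by right.
exfalso; move: ne nadj; rewrite e1 e2.
have [-> | nx] := eqVneq x1 x2; first by rewrite eqxx.
by rewrite iU1 // eqxx.
Qed.

Lemma TJ_W2 (V : finType) (e : rel V) (I : {set V}) (a b y0 : V) :
  a \notin I -> b \notin I -> a != b -> y0 \in I ->
  is_kclique e #|I|.+1 (a |: I) -> is_kclique e #|I|.+1 (b |: I) ->
  is_kclique e #|I|.+1 (a |: (b |: (I :\ y0))) ->
  #|SS (is_kclique e #|I|.+1) #|I|.+1 (a |: I) (b |: I) (a |: (b |: (I :\ y0)))| = #|I|.
Proof.
move=> ha hb ab hy0 cA cB cW; apply: S_T2 => //.
- by move=> X; apply: kc_card.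
- by move=> y hy; apply: (clique_T2 ha hb ab hy0).
Qed.

Lemma TJ_key (V : finType) (e : rel V) (k : nat) (u v w1 w2 : TJ_vertex e k) :
  1 <= k -> TJ_rel u v -> TJ_rel u w1 -> TJ_rel v w1 -> TJ_rel u w2 -> TJ_rel v w2 ->
  w1 != w2 -> ~~ TJ_rel w1 w2 ->
  exists w, [/\ TJ_rel u w, TJ_rel v w & cnt (@TJ_rel V e k) u v w = k.-1].
Proof.
move=> k1 huv hu1 hv1 hu2 hv2 ne nadj.
have cnt_eq : forall w, cnt (@TJ_rel V e k) u v w =
   #|SS (is_kclique e k) k (val u) (val v) (val w)|.
  by move=> w; rewrite /SS -cnt_sig.
have cu := kc_card (valP u); have cv := kc_card (valP v).
have c1 := kc_card (valP w1); have c2 := kc_card (valP w2).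
have [a [b [haI hbI ab eu ev]]] := decomp k1 cu cv (eqP huv).
have hk : k = #|val u :&: val v|.+1 by move: (eqP huv); lia.
have ku := valP u; have kv := valP v; have k1' := valP w1; have k2' := valP w2.
move: (val u :&: val v) hk eu ev haI hbI => I hk eu ev haI hbI.
have main : forall w : TJ_vertex e k, TJ_rel u w -> TJ_rel v w ->
    (exists y, y \in I /\ val w = a |: (b |: (I :\ y))) ->
    [/\ TJ_rel u w, TJ_rel v w & cnt (@TJ_rel V e k) u v w = k.-1].
  move=> w huw hvw [y [hy ew]]; split => //.
  have kw := valP w.
  rewrite cnt_eq ew eu ev; move: ku kv kw; rewrite ew eu ev hk /= => ku kv kw.
  exact: TJ_W2.
have c1' : #|val w1| = #|I|.+1 by rewrite c1 hk.
have c2' : #|val w2| = #|I|.+1 by rewrite c2 hk.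
have hu1' : #|(a |: I) :&: val w1| = #|I| by rewrite -eu (eqP hu1) hk.
have hv1' : #|(b |: I) :&: val w1| = #|I| by rewrite -ev (eqP hv1) hk.
have hu2' : #|(a |: I) :&: val w2| = #|I| by rewrite -eu (eqP hu2) hk.
have hv2' : #|(b |: I) :&: val w2| = #|I| by rewrite -ev (eqP hv2) hk.
have nadj' : #|val w1 :&: val w2| != #|I|.
  by apply: contra nadj => /eqP h; rewrite /TJ_rel h hk.
have ne' : val w1 != val w2 by apply: contra ne => /eqP /val_inj ->.
case: (TJ_set e haI hbI ab c1' c2' hu1' hv1' hu2' hv2' ne' nadj') => hw.
  by exists w1; apply: main.
by exists w2; apply: main.
Qed.

Lemma J_key (n r : nat) (u v w : J_vertex n r) :
  1 <= r -> J_rel u v -> J_rel u w -> J_rel v w ->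
  cnt (@J_rel n r) u v w = r.-1 \/ cnt (@J_rel n r) u v w = n - r.+1.
Proof.
move=> r1 huv huw hvw.
have cnt_eq : cnt (@J_rel n r) u v w =
   #|SS (fun X => #|X| == r) r (val u) (val v) (val w)|.
  by rewrite /SS -cnt_sig.
have cu := eqP (valP u); have cv := eqP (valP v); have cw := eqP (valP w).
have [a [b [haI hbI ab eu ev]]] := decomp r1 cu cv (eqP huv).
have hk : r = #|val u :&: val v|.+1 by move: (eqP huv); lia.
move: (eqP huw) (eqP hvw); rewrite cnt_eq.
move: (val u :&: val v) hk eu ev haI hbI => I hk eu ev haI hbI.
rewrite eu ev; move: (val w) cw => W cw.
rewrite hk /= in cw * => hA hB.
case: (classify haI hbI ab cw hA hB) => [[x [hx xa xb ->]] | [y [hy ->]]].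
  right; rewrite S_T1 // ?card_ord //.
  - by move=> X /eqP.
  - by move=> x' hx' _ _; rewrite cU1.
left; rewrite S_T2 //.
- by move=> X /eqP.
- by move=> y' hy'; rewrite cT2.
Qed.



Lemma pick_out (T : finType) (S : {set T}) : #|S| < #|T| -> exists x, x \notin S.
Proof.
move=> h; apply/existsP; rewrite -negb_forall; apply/negP => /forallP hall.
have : S = setT by apply/setP => x; rewrite inE hall.
by move=> hS; move: h; rewrite hS cardsT ltnn.
Qed.

Lemma exists_set (T : finType) (m : nat) : m <= #|T| -> exists S : {set T}, #|S| = m.
Proof.
elim: m => [|m IH] hm; first by exists set0; rewrite cards0.
have [S hS] := IH (ltnW hm).
have [x hx] : exists x, x \notin S by apply: pick_out; rewrite hS.
by exists (x |: S); rewrite cU1 // hS.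
Qed.

Lemma J_exist (n r : nat) : 2 <= r -> r.+2 <= n ->
  exists u v w1 w2 : J_vertex n r,
    J_rel u v /\ J_rel u w1 /\ J_rel v w1 /\ J_rel u w2 /\ J_rel v w2 /\
    w1 != w2 /\ ~~ J_rel w1 w2.
Proof.
move=> r2 rn.
have [I hI] : exists I : {set 'I_n}, #|I| = r.-1 by apply: exists_set; rewrite card_ord; lia.
have [a ha] : exists a, a \notin I by apply: pick_out; rewrite card_ord; lia.
have [b hb] : exists b, b \notin a |: I by apply: pick_out; rewrite card_ord cU1 //; lia.
move: hb; rewrite !inE negb_or => /andP[ba hbI].
have [x hx] : exists x, x \notin b |: (a |: I).
  by apply: pick_out; rewrite card_ord cU1 ?cU1 // ?inE ?negb_or ?ba //; lia.
move: hx; rewrite !inE !negb_or => /andP[xb /andP[xa hxI]].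
have [y hy] : exists y, y \in I by apply/card_gt0P; lia.
have ab : a != b by rewrite eq_sym.
have pA : #|a |: I| == r by rewrite cU1 // hI; lia.
have pB : #|b |: I| == r by rewrite cU1 // hI; lia.
have pX : #|x |: I| == r by rewrite cU1 // hI; lia.
have pY : #|a |: (b |: (I :\ y))| == r by rewrite cT2 // hI; lia.
pose P := fun A : {set 'I_n} => #|A| == r.
exists (@exist _ P _ pA), (@exist _ P _ pB), (@exist _ P _ pX), (@exist _ P _ pY).
rewrite /J_rel /=.
rewrite iU1 // iU1 // 1?eq_sym // iU1 // 1?eq_sym // iAT2 // iBT2 // iT1T2 //.
rewrite (cU1D1 ha hy) (cU1D1 hbI hy) (cD1 hy) hI eqxx /=.
split => //; split => //; split => //; split => //; split => //; split.
  apply/negP => /eqP [] /setP /(_ a); rewrite !inE eqxx eq_sym (negbTE xa) (negbTE ha) //.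
lia.
Qed.

Lemma hard_dir (n r k : nat) (V : finType) (e : rel V) :
  1 <= k -> 2 <= r -> r.+2 <= n ->
  graph_iso (@TJ_rel V e k) (@J_rel n r) -> k = r \/ k = n - r.
Proof.
move=> k1 r2 rn [f [fb hf]].
have [u [v [w1 [w2 [h1 [h2 [h3 [h4 [h5 [h6 h7]]]]]]]]]] := J_exist r2 rn.
case: (fb) => h fh hf'.
have tj : forall x y, TJ_rel (h x) (h y) = J_rel x y by move=> x y; rewrite -hf !hf'.
have ne : h w1 != h w2 by apply: contra h6 => /eqP /(congr1 f); rewrite !hf' => ->.
have := @TJ_key V e k (h u) (h v) (h w1) (h w2) k1.
rewrite !tj => /(_ h1 h2 h3 h4 h5 ne); rewrite h7 => /(_ isT) [w [hu hv hc]].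
have := J_key (n:=n) (r:=r) (u := f (h u)) (v := f (h v)) (w := f w) (ltnW r2).
rewrite !hf tj => /(_ h1 hu hv).
rewrite (cnt_iso fb hf) hc; lia.
Qed.

Lemma iso_sym (T1 T2 : finType) (g1 : rel T1) (g2 : rel T2) :
  graph_iso g1 g2 -> graph_iso g2 g1.
Proof.
move=> [f [[h fh hf] he]]; exists h; split; first by exists f.
by move=> x y; rewrite -he !hf.
Qed.

Lemma iso_trans (T1 T2 T3 : finType) (g1 : rel T1) (g2 : rel T2) (g3 : rel T3) :
  graph_iso g1 g2 -> graph_iso g2 g3 -> graph_iso g1 g3.
Proof.
move=> [f [fb fe]] [f' [fb' fe']]; exists (f' \o f); split.
  exact: bij_comp.
by move=> x y /=; rewrite fe' fe.
Qed.

Definition Kn (n : nat) : rel 'I_n := fun x y => x != y.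

Lemma Kn_simple (n : nat) : simple_graph (@Kn n).
Proof. by split; [move=> x y; rewrite /Kn eq_sym | move=> x; rewrite /Kn eqxx]. Qed.

Lemma Kn_clique (n k : nat) (A : {set 'I_n}) : is_kclique (@Kn n) k A = (#|A| == k).
Proof.
apply/idP/idP; first by case/andP.
by move/eqP => hA; apply: kc_intro => // x y _ _.
Qed.

Lemma TJ_Kn (n k : nat) : graph_iso (@TJ_rel _ (@Kn n) k) (@J_rel n k).
Proof.
have p1 : forall C : TJ_vertex (@Kn n) k, #|val C| == k.
  by move=> C; rewrite -Kn_clique (valP C).
have p2 : forall A : J_vertex n k, is_kclique (@Kn n) k (val A).
  by move=> A; rewrite Kn_clique (valP A).
exists (fun C => @exist _ (fun A : {set 'I_n} => #|A| == k) _ (p1 C)); split.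
  exists (fun A => @exist _ (is_kclique (@Kn n) k) _ (p2 A)).
    by move=> C; apply: val_inj.
  by move=> A; apply: val_inj.
by [].
Qed.

Lemma J_compl (n m r : nat) : 1 <= m -> 1 <= r -> m + r = n ->
  graph_iso (@J_rel n m) (@J_rel n r).
Proof.
move=> m1 r1 hmr.
have p1 : forall A : J_vertex n m, #|~: val A| == r.
  by move=> A; have := cardsC (val A); rewrite (eqP (valP A)) card_ord; lia.
have p2 : forall A : J_vertex n r, #|~: val A| == m.
  by move=> A; have := cardsC (val A); rewrite (eqP (valP A)) card_ord; lia.
exists (fun A => @exist _ (fun B : {set 'I_n} => #|B| == r) _ (p1 A)); split.
  exists (fun A => @exist _ (fun B : {set 'I_n} => #|B| == m) _ (p2 A)).
    by move=> C; apply: val_inj; rewrite /= setCK.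
  by move=> A; apply: val_inj; rewrite /= setCK.
move=> x y; rewrite /J_rel /= -setCU.
have := cardsC (val x :|: val y); have := cardsUI (val x) (val y).
have := subset_leq_card (subsetT (val x :|: val y)).
rewrite cardsT card_ord (eqP (valP x)) (eqP (valP y)).
have := subset_leq_card (subsetIl (val x) (val y)); rewrite (eqP (valP x)).
move: #|_ :&: _| #|_ :|: _| #|~: _| => i u c.
move=> h1 h2 h3 h4.
by apply/eqP/eqP; lia.
Qed.

Definition isl (A B : Type) (x : A + B) : bool := if x is inl _ then true else false.

Definition Hk (m n : nat) : rel ('I_m + 'I_n)%type :=
  fun x y => (x != y) && (isl x || isl y).

Lemma Hk_simple (m n : nat) : simple_graph (@Hk m n).
Proof.
split; first by move=> x y; rewrite /Hk eq_sym orbC.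
by move=> x; rewrite /Hk eqxx.
Qed.

Definition Lset (m n : nat) : {set ('I_m + 'I_n)%type} := [set x | isl x].

Lemma cardLR (m n : nat) (S : {set 'I_n}) : #|Lset m n :|: inr @: S| = m + #|S|.
Proof.
have -> : Lset m n = inl @: [set: 'I_m].
  apply/setP => x; rewrite inE; case: x => [i | j] /=.
    by rewrite (mem_imset _ _ (@inl_inj _ _)) inE.
  by apply/esym/imsetP => -[i _].
rewrite cardsU card_imset ?card_imset; try exact: inl_inj; try exact: inr_inj.
have -> : inl @: [set: 'I_m] :&: inr @: S = set0.
  apply/setP => x; rewrite !inE; apply/negP => /andP[/imsetP [i _ ->] /imsetP [j _]] //.
by rewrite cards0 cardsT card_ord subn0.
Qed.

Lemma LR_I (m n : nat) (X Y : {set 'I_n}) :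
  (Lset m n :|: inr @: X) :&: (Lset m n :|: inr @: Y) = Lset m n :|: inr @: (X :&: Y).
Proof. by rewrite -setUIr imsetI //; move=> x y _ _; exact: inr_inj. Qed.

Lemma Hk_iso (m n : nat) : graph_iso (@J_rel n 1) (@TJ_rel _ (@Hk m n) m.+1).
Proof.
have pg : forall A : J_vertex n 1, is_kclique (@Hk m n) m.+1 (Lset m n :|: inr @: val A).
  move=> A; apply: kc_intro; first by rewrite cardLR (eqP (valP A)) addn1.
  move=> x y; rewrite !inE /Hk => hx hy xy; rewrite xy /=.
  case/orP: hx => [-> // | /imsetP [i hi ex]].
  case/orP: hy => [-> | /imsetP [j hj ey]]; first by rewrite orbT.
  exfalso; case/cards1P: (valP A) => z hz.
  move: hi hj; rewrite hz !inE => /eqP ei /eqP ej.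
  by move: xy; rewrite ex ey ei ej eqxx.
pose g := fun A : J_vertex n 1 => @exist _ (is_kclique (@Hk m n) m.+1) _ (pg A).
have pf : forall C : TJ_vertex (@Hk m n) m.+1, #|[set i | inr i \in val C]| == 1.
  move=> C; have cC := kc_card (valP C).
  have sub : val C \subset Lset m n :|: inr @: [set i | inr i \in val C].
    apply/subsetP => x xC; rewrite !inE; case: x xC => [i | j] //= jC.
    by apply/imsetP; exists j; rewrite ?inE.
  have := subset_leq_card sub; rewrite cardLR cC => h1.
  have h2 : #|[set i | inr i \in val C]| <= 1.
    rewrite leqNgt; apply/negP => /card_gt1P [i [j [hi hj ij]]].
    move: hi hj; rewrite !inE => hi hj.
    have := kc_e (valP C) hi hj.
    rewrite /Hk /=; move/(_ (contra (fun h => introT eqP (inr_inj (eqP h))) ij)).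
    by rewrite andbF.
  by apply/eqP/anti_leq; rewrite h2 /= -(ltn_add2l m) addn0.
pose f := fun C : TJ_vertex (@Hk m n) m.+1 =>
  @exist _ (fun B : {set 'I_n} => #|B| == 1) _ (pf C).
exists g; split.
  exists f.
    move=> A; apply: val_inj => /=; apply/setP => i.
    by rewrite !inE (mem_imset _ _ (@inr_inj _ _)).
  move=> C; apply: val_inj => /=; apply/eqP; rewrite eq_sym eqEcard.
  rewrite cardLR (eqP (pf C)) (kc_card (valP C)) addn1 leqnn andbT.
  apply/subsetP => x xC; rewrite !inE; case: x xC => [i | j] //= jC.
  by apply/imsetP; exists j; rewrite ?inE.
move=> x y; rewrite /TJ_rel /J_rel /= LR_I cardLR /=.
by apply/eqP/eqP; lia.
Qed.


Lemma pos_r (n r : nat) : 1 <= r -> in_KTJ (@J_rel n r) r.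
Proof. move=> r1; split => //; exists 'I_n, (@Kn n); split; [exact: Kn_simple | exact: TJ_Kn]. Qed.

Lemma pos_nr (n r : nat) : 1 <= r -> r < n -> in_KTJ (@J_rel n r) (n - r).
Proof.
move=> r1 rn; split; first lia.
exists 'I_n, (@Kn n); split; first exact: Kn_simple.
apply: iso_trans (TJ_Kn n (n - r)) (J_compl _ _ _); lia.
Qed.

Lemma pos_s1 (n r k : nat) : 1 <= r -> r < n -> (r = 1 \/ r = n - 1) -> 1 <= k ->
  in_KTJ (@J_rel n r) k.
Proof.
move=> r1 rn hr; case: k => // k _; split => //.
exists ('I_k + 'I_n)%type, (@Hk k n); split; first exact: Hk_simple.
apply: iso_trans (iso_sym (Hk_iso k n)) _.
case: hr => [-> | hr]; first by exists id; split => //; exists id.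
apply: J_compl; lia.
Qed.

Theorem theorem4p14 (n r : nat) :
  2 <= n -> 1 <= r <= n - 1 ->
  let s := minn r (n - r) in
  [/\ s = 1 -> (forall k, in_KTJ (@J_rel n r) k <-> 1 <= k),
      2 <= s -> n = 2 * s -> (forall k, in_KTJ (@J_rel n r) k <-> k = s)
    & 2 <= s -> 2 * s < n ->
        (forall k, in_KTJ (@J_rel n r) k <-> (k = s \/ k = n - s))].
Proof.
move=> hn /andP[r1 rn] s.
have hs : s = minn r (n - r) by [].
clearbody s; split.
- move=> s1 k; split; first by case.
  by apply: pos_s1 => //; lia.
- move=> s2 hns k; split.
    case=> k1 [V [e [_ hi]]].
    have := hard_dir k1 _ _ hi; lia.
  move=> ->; have -> : s = r by lia.
  exact: pos_r.
- move=> s2 hns k; split.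
    case=> k1 [V [e [_ hi]]].
    have := hard_dir k1 _ _ hi; lia.
  case: (leqP r (n - r)) => hrr.
    have -> : s = r by lia.
    case=> ->; [exact: pos_r | apply: pos_nr; lia].
  have -> : s = n - r by lia.
  have -> : n - (n - r) = r by lia.
  case=> ->; [apply: pos_nr; lia | exact: pos_r].
Qed.
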